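(* Let $M=\frac32-\sqrt2$ and for $\xi\in[0,\frac14]$ define $$G_\xi(w,f)=(1-f)\,y\left(\tfrac12-y\right)+4M\xi\cdot\frac{w}{1-f},\qquad y=1-\frac{w}{1-f}.$$ Let $\kappa=\frac{1019}{1000}$. For all $w_1,w_2,w_3\in[0,\frac12]$ and $f_1,f_2,f_3\in[0,\frac12]$ such that $\frac{1-f_i}{2}\le w_i\le1-f_i$ for $i=1,2,3$, and for every $\xi\in[0,\frac14]$, $$\tfrac12\bigl(G_\xi(w_1,f_1)+G_\xi(w_2,f_2)\bigr)\le\kappa\cdot G_\xi\!\left(\tfrac{w_1+w_2}{2},\tfrac{f_1+f_2}{2}\right),$$ $$\tfrac13\bigl(G_\xi(w_1,f_1)+G_\xi(w_2,f_2)+G_\xi(w_3,f_3)\bigr)\le\kappa\cdot G_\xi\!\left(\tfrac{w_1+w_2+w_3}{3},\tfrac{f_1+f_2+f_3}{3}\right).$$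
   Context: Here $(1-f)y(\frac12-y)$ with $y=1-\frac{w}{1-f}$ is the quantity $\frac{1-f}{\Phi(1-\frac w{1-f})}$ for the potential $\Phi(x)=\frac{1}{x(\frac12-x)}$; $M=\frac32-\sqrt2=\sup_{0\le x\le1/2}\frac{x(\frac12-x)}{1-x}$. *)

(* Defs.v *)
From Stdlib Require Import Reals.
Open Scope R_scope.

Definition Mconst : R := 3/2 - sqrt 2.

Definition G (xi w f : R) : R :=
  let y := 1 - w / (1 - f) in
  (1 - f) * y * (1/2 - y) + 4 * Mconst * xi * (w / (1 - f)).

Definition kappa : R := 1019 / 1000.

Definition admissible (w f : R) : Prop :=
  0 <= w <= 1/2 /\ 0 <= f <= 1/2 /\ (1 - f) / 2 <= w <= 1 - f.

(* Main.v *)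
Require Import Defs.
From Stdlib Require Import Reals Lra Psatz.
Open Scope R_scope.

Definition F (c w g : R) : R := - (w*w)/g + 3/2*w - g/2 + c*w/g.

Lemma G_F xi w f : f < 1 -> G xi w f = F (4*Mconst*xi) w (1-f).
Proof. intros. unfold G, F. field. lra. Qed.

Lemma key c w g wb gb : 0 <= c -> 1/2 <= g -> g/2 <= w <= g -> 1/2 <= gb ->
  gb/2 <= wb <= gb -> c*(g-gb)^2 <= 2*(kappa-1)*g*gb^2 ->
  F c w g <= kappa*F c wb gb + (-2*wb/gb+3/2+c/gb)*(w-wb)
     + (wb*wb/(gb*gb) - 1/2 - c*wb/(gb*gb))*(g-gb).
Proof.
  intros Hc Hg Hw Hgb Hwb H.
  set (X := wb*g - w*gb).
  assert (E : F c w g - F c wb gb - (-2*wb/gb+3/2+c/gb)*(w-wb)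
     - (wb*wb/(gb*gb) - 1/2 - c*wb/(gb*gb))*(g-gb)
     = (-(X*X) + c*(g-gb)*X)/(g*(gb*gb))).
  { unfold F, X. field. lra. }
  assert (EF : F c wb gb = (gb-wb)*(2*wb-gb)/(2*gb) + c*wb/gb).
  { unfold F. field. lra. }
  assert (A0 : 0 <= (gb-wb)*(2*wb-gb)/(2*gb)).
  { apply Rmult_le_pos; [nra | apply Rlt_le, Rinv_0_lt_compat; lra]. }
  assert (B : -(X*X) + c*(g-gb)*X <= (kappa-1)*g*gb*c*wb).
  { clearbody X. assert (-(X*X) + c*(g-gb)*X <= c*c*(g-gb)^2/4) by (assert (0 <= (X - c*(g-gb)/2)^2) by apply pow2_ge_0; nra).
    assert (c*c*(g-gb)^2 <= c*(2*(kappa-1)*g*gb^2)) by nra.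
    assert (0 <= c*g*gb*(2*wb - gb)) by (repeat apply Rmult_le_pos; lra).
    unfold kappa in *. nra. }
  assert (C : (-(X*X) + c*(g-gb)*X)/(g*(gb*gb)) <= (kappa-1) * (c*wb/gb)).
  { apply Rmult_le_reg_r with (g*(gb*gb)). nra.
    unfold Rdiv. replace ((-(X*X) + c*(g-gb)*X)*/(g*(gb*gb))*(g*(gb*gb)))
      with (-(X*X) + c*(g-gb)*X) by (field; lra).
    replace ((kappa-1) * (c*wb*/gb) * (g*(gb*gb))) with ((kappa-1)*g*gb*c*wb) by (field; lra).
    exact B. }
  assert (0 <= (kappa-1) * ((gb-wb)*(2*wb-gb)/(2*gb))) by (unfold kappa; nra).
  assert (kappa*F c wb gb = F c wb gb + (kappa-1)*((gb-wb)*(2*wb-gb)/(2*gb)) + (kappa-1)*(c*wb/gb)) by (rewrite EF; ring).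
  lra.
Qed.
Lemma Hk2 c g1 g2 : 0 <= c <= 858/10000 -> 1/2<=g1<=1 -> 1/2<=g2<=1 ->
  c*(g1-(g1+g2)/2)^2 <= 2*(kappa-1)*g1*((g1+g2)/2)^2.
Proof.
  intros Hc H1 H2.
  assert (c*(g1-(g1+g2)/2)^2 <= 858/10000*(g1-(g1+g2)/2)^2).
  { apply Rmult_le_compat_r. apply pow2_ge_0. lra. }
  unfold kappa. nra.
Qed.

Lemma Hk3 c g1 g2 g3 : 0 <= c <= 858/10000 -> 1/2<=g1<=1 -> 1/2<=g2<=1 -> 1/2<=g3<=1 ->
  c*(g1-(g1+g2+g3)/3)^2 <= 2*(kappa-1)*g1*((g1+g2+g3)/3)^2.
Proof.
  intros Hc H1 H2 H3.
  set (q := (g2+g3)/2).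
  assert (1/2 <= q <= 1) by (unfold q; lra).
  replace ((g1+g2+g3)/3) with ((g1 + 2*q)/3) by (unfold q; field).
  clearbody q.
  assert (c*(g1-(g1+2*q)/3)^2 <= 858/10000*(g1-(g1+2*q)/3)^2).
  { apply Rmult_le_compat_r. apply pow2_ge_0. lra. }
  unfold kappa. nra.
Qed.

Lemma M_bounds : 0 <= Mconst <= 858/10000.
Proof.
  unfold Mconst.
  assert (sqrt (14142/10000 * (14142/10000)) <= sqrt 2) by (apply sqrt_le_1_alt; lra).
  assert (sqrt 2 <= sqrt (3/2*(3/2))) by (apply sqrt_le_1_alt; lra).
  rewrite sqrt_square in * by lra. lra.
Qed.

Lemma two c w1 w2 g1 g2 : 0 <= c <= 858/10000 ->
  1/2<=g1<=1 -> g1/2<=w1<=g1 -> 1/2<=g2<=1 -> g2/2<=w2<=g2 ->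
  (1/2)*(F c w1 g1 + F c w2 g2) <= kappa * F c ((w1+w2)/2) ((g1+g2)/2).
Proof.
  intros Hc H1 H1' H2 H2'.
  set (wb := (w1+w2)/2). set (gb := (g1+g2)/2).
  set (a := -2*wb/gb+3/2+c/gb). set (b := wb*wb/(gb*gb) - 1/2 - c*wb/(gb*gb)).
  assert (K1 := key c w1 g1 wb gb). assert (K2 := key c w2 g2 wb gb).
  assert (S : a*(w1-wb) + b*(g1-gb) + (a*(w2-wb) + b*(g2-gb)) = 0) by (clearbody a b; unfold wb, gb; idtac; lra).
  assert (Hg1 := Hk2 c g1 g2 Hc H1 H2). assert (Hg2 := Hk2 c g2 g1 Hc H2 H1).
  replace ((g2+g1)/2) with gb in Hg2 by (unfold gb; lra).
  fold gb in Hg1.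
  unfold a, b in S.
  assert (0 <= c) by lra.
  specialize (K1 ltac:(lra) ltac:(lra) ltac:(lra) ltac:(unfold gb; lra) ltac:(unfold wb, gb; lra) Hg1).
  specialize (K2 ltac:(lra) ltac:(lra) ltac:(lra) ltac:(unfold gb; lra) ltac:(unfold wb, gb; lra) Hg2).
  lra.
Qed.

Lemma three c w1 w2 w3 g1 g2 g3 : 0 <= c <= 858/10000 ->
  1/2<=g1<=1 -> g1/2<=w1<=g1 -> 1/2<=g2<=1 -> g2/2<=w2<=g2 -> 1/2<=g3<=1 -> g3/2<=w3<=g3 ->
  (1/3)*(F c w1 g1 + F c w2 g2 + F c w3 g3) <= kappa * F c ((w1+w2+w3)/3) ((g1+g2+g3)/3).
Proof.
  intros Hc H1 H1' H2 H2' H3 H3'.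
  set (wb := (w1+w2+w3)/3). set (gb := (g1+g2+g3)/3).
  set (a := -2*wb/gb+3/2+c/gb). set (b := wb*wb/(gb*gb) - 1/2 - c*wb/(gb*gb)).
  assert (K1 := key c w1 g1 wb gb). assert (K2 := key c w2 g2 wb gb).
  assert (K3 := key c w3 g3 wb gb).
  assert (S : a*(w1-wb) + b*(g1-gb) + (a*(w2-wb) + b*(g2-gb)) + (a*(w3-wb) + b*(g3-gb)) = 0)
    by (clearbody a b; unfold wb, gb; idtac; lra).
  assert (Hg1 := Hk3 c g1 g2 g3 Hc H1 H2 H3).
  assert (Hg2 := Hk3 c g2 g1 g3 Hc H2 H1 H3).
  assert (Hg3 := Hk3 c g3 g1 g2 Hc H3 H1 H2).
  replace ((g2+g1+g3)/3) with gb in Hg2 by (unfold gb; lra).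
  replace ((g3+g1+g2)/3) with gb in Hg3 by (unfold gb; lra).
  fold gb in Hg1.
  unfold a, b in S.
  assert (0 <= c) by lra.
  specialize (K1 ltac:(lra) ltac:(lra) ltac:(lra) ltac:(unfold gb; lra) ltac:(unfold wb, gb; lra) Hg1).
  specialize (K2 ltac:(lra) ltac:(lra) ltac:(lra) ltac:(unfold gb; lra) ltac:(unfold wb, gb; lra) Hg2).
  specialize (K3 ltac:(lra) ltac:(lra) ltac:(lra) ltac:(unfold gb; lra) ltac:(unfold wb, gb; lra) Hg3).
  lra.
Qed.

Theorem lemma23 (w1 w2 w3 f1 f2 f3 xi : R) :
  admissible w1 f1 -> admissible w2 f2 -> admissible w3 f3 ->
  0 <= xi <= 1/4 ->
  (1/2) * (G xi w1 f1 + G xi w2 f2)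
    <= kappa * G xi ((w1 + w2) / 2) ((f1 + f2) / 2)
  /\
  (1/3) * (G xi w1 f1 + G xi w2 f2 + G xi w3 f3)
    <= kappa * G xi ((w1 + w2 + w3) / 3) ((f1 + f2 + f3) / 3).
Proof.
  unfold admissible; intros A1 A2 A3 Hxi.
  assert (HM := M_bounds).
  assert (Hc : 0 <= 4*Mconst*xi <= 858/10000) by nra.
  rewrite !G_F by lra.
  replace (1 - (f1+f2)/2) with (((1-f1)+(1-f2))/2) by field.
  replace (1 - (f1+f2+f3)/3) with (((1-f1)+(1-f2)+(1-f3))/3) by field.
  split.
  - apply two; lra.
  - apply three; lra.
Qed.
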